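(* No graph in $\mathfrak D_4$ contains an induced cube, i.e. an induced subgraph isomorphic to the graph obtained from $K_{4,4}$ by deleting a perfect matching.
   Context: $\mathfrak D_4$ is the class of (finite) maximal triangle-free graphs satisfying property $\mathscr{D}_4$. Maximal triangle-free: no triangle, and adding any new edge creates a triangle. Property $\mathscr{D}_k$: for every $m\in\{1,\dots,k\}$ and every sequence $x_1,\dots,x_{3m}$ of (not necessarily distinct) vertices there is a vertex $y$ with $|\{i\in[3m]: x_iy\in E(G)\}|\ge m+1$. *)

(* Defs.v *)
From mathcomp Require Import all_boot.
Set Implicit Arguments. Unset Strict Implicit. Unset Printing Implicit Defensive.

Definition simple_graph (T : finType) (e : rel T) : Prop :=
  symmetric e /\ irreflexive e.

Definition triangle_free (T : finType) (e : rel T) : Prop :=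
  forall x y z : T, ~ [/\ e x y, e y z & e x z].

Definition maximal_triangle_free (T : finType) (e : rel T) : Prop :=
  triangle_free e /\
  forall x y : T, x != y -> ~~ e x y -> exists z, e x z && e z y.

(* Property D_k: for all m in {1..k} and all sequences x_1..x_{3m} of
   vertices (not necessarily distinct) there is a vertex y adjacent to at
   least m+1 of the x_i (counted with index multiplicity). *)
Definition prop_D (k : nat) (T : finType) (e : rel T) : Prop :=
  forall m : nat, 1 <= m <= k ->
  forall x : 'I_(3 * m) -> T,
  exists y : T, m.+1 <= #|[set i : 'I_(3 * m) | e (x i) y]|.

Definition in_frakD4 (T : finType) (e : rel T) : Prop :=
  [/\ simple_graph e, maximal_triangle_free e & prop_D 4 e].

(* The cube Q_3 = K_{4,4} minus a perfect matching: vertices (s, i) with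
   side s in 'I_2 and index i in 'I_4; (s,i) ~ (t,j) iff s != t and i != j. *)
Definition cube_adj (a b : 'I_2 * 'I_4) : bool := (a.1 != b.1) && (a.2 != b.2).

Definition has_induced_cube (T : finType) (e : rel T) : Prop :=
  exists f : 'I_2 * 'I_4 -> T,
    injective f /\ forall a b, e (f a) (f b) = cube_adj a b.

(* Main.v *)
Require Import Defs.
From mathcomp Require Import all_boot.

Lemma card_cnt n (P : nat -> bool) : #|[set k : 'I_n | P k]| = count P (iota 0 n).
Proof.
rewrite -val_enum_ord count_map -size_filter cardsE cardE /enum_mem.
by congr size; rewrite -filter_predI; apply: eq_filter => x /=;
  rewrite [x \in 'I_n]inE andbT unfold_in.
Qed.

Lemma comb6 (c0 c1 c2 c3 c4 c5 : bool) :
  ~~ (c0 && c3) && ~~ (c1 && c2) && ~~ (c4 && c0) && ~~ (c4 && c2) && ~~ (c5 && c1) && ~~ (c5 && c3) ->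
  2 < c0 + (c1 + (c2 + (c3 + (c4 + (c5 + (0)))))) -> (c0 && c2 && c5) || (c1 && c3 && c4).
Proof.
by case: c0; case: c1; case: c2; case: c3; case: c4; case: c5.
Qed.

Lemma comb12 (c0 c1 c2 c3 c4 c5 c6 c7 c8 c9 c10 c11 : bool) :
  ~~ (c0 && c5) && ~~ (c0 && c6) && ~~ (c0 && c7) && ~~ (c1 && c4) && ~~ (c1 && c6) && ~~ (c1 && c7) && ~~ (c2 && c4) && ~~ (c2 && c5) && ~~ (c2 && c7) && ~~ (c3 && c4) && ~~ (c3 && c5) && ~~ (c3 && c6) && ~~ (c8 && c0) && ~~ (c8 && c4) && ~~ (c9 && c1) && ~~ (c9 && c5) && ~~ (c10 && c2) && ~~ (c10 && c6) && ~~ (c11 && c3) && ~~ (c11 && c7) && ~~ (c8 && c9) && ~~ (c10 && c11) ->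
  c0 + (c1 + (c2 + (c3 + (c4 + (c5 + (c6 + (c7 + (c8 + (c9 + (c10 + (c11 + (0)))))))))))) <= 4.
Proof.
by case: c0; case: c1; case: c2; case: c3; case: c4; case: c5; case: c6; case: c7; case: c8; case: c9; case: c10; case: c11.
Qed.


Section Main.
Variables (T : finType) (e : rel T).
Hypothesis (Hsym : symmetric e) (Htf : triangle_free e)
  (Hmax : forall x y : T, x != y -> ~~ e x y -> exists z, e x z && e z y)
  (HD : prop_D 4 e).
Variable f : 'I_2 * 'I_4 -> T.
Hypothesis (finj : injective f) (hf : forall a b, e (f a) (f b) = cube_adj a b).

Let A i := f (ord0, i).
Let B i := f (ord_max, i).

Lemma tri2 u v y : e u v -> ~~ (e u y && e v y).
Proof.
move=> huv; apply/negP => /andP [huy hvy].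
by apply: (Htf u v y); split => //; rewrite Hsym.
Qed.

Lemma Zex i : exists z, e (A i) z && e (B i) z.
Proof.
have hne : A i != B i.
  by apply/negP => /eqP /finj /(congr1 (fun p => nat_of_ord p.1)).
have hnadj : ~~ e (A i) (B i) by rewrite /A /B hf /cube_adj eqxx andbF.
have [z /andP [h1 h2]] := Hmax _ _ hne hnadj.
by exists z; rewrite h1 Hsym.
Qed.

Lemma AB i j : i != j -> e (A i) (B j).
Proof. by move=> hij; rewrite /A /B hf /cube_adj /= hij. Qed.

Lemma edgeZ i j : i != j -> exists u v,
  [/\ e (A i) u, e (B i) u, e (A j) v, e (B j) v & e u v].
Proof.
move=> hij.
have [zi /andP [hzi1 hzi2]] := Zex i.
have [zj /andP [hzj1 hzj2]] := Zex j.
pose s := [:: A i; A j; B i; B j; zi; zj].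
have [y hy] := HD 2 isT (fun k => nth zi s k).
rewrite (card_cnt (3 * 2) (fun k => e (nth zi s k) y)) /= in hy.
have hji : j != i by rewrite eq_sym.
have := comb6 (e (A i) y) (e (A j) y) (e (B i) y) (e (B j) y) (e zi y) (e zj y).
have e1 : e zi (A i) by rewrite Hsym.
have e2 : e zi (B i) by rewrite Hsym.
have e3 : e zj (A j) by rewrite Hsym.
have e4 : e zj (B j) by rewrite Hsym.
rewrite (tri2 _ _ _ (AB _ _ hij)) (tri2 _ _ _ (AB _ _ hji)) (tri2 _ _ _ e1) (tri2 _ _ _ e2)
  (tri2 _ _ _ e3) (tri2 _ _ _ e4).
move=> /(_ isT hy) /orP [/andP [/andP [h1 h2] h3]|/andP [/andP [h1 h2] h3]].
  by exists y, zj; split => //; rewrite Hsym.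
by exists zi, y.
Qed.

End Main.


Theorem mainTheorem11 (T : finType) (e : rel T) :
  in_frakD4 e -> ~ has_induced_cube e.
Proof.
case=> [[Hsym Hirr] [Htf Hmax] HD] [f [finj hf]].
pose o0 := @Ordinal 4 0 isT. pose o1 := @Ordinal 4 1 isT.
pose o2 := @Ordinal 4 2 isT. pose o3 := @Ordinal 4 3 isT.
pose A i := f (ord0, i). pose B i := f (ord_max, i).
have [u1 [v1 [a1 b1 c1 d1 uv1]]] :=
  @edgeZ _ _ Hsym Htf Hmax HD f finj hf o0 o1 isT.
have [u2 [v2 [a2 b2 c2 d2 uv2]]] :=
  @edgeZ _ _ Hsym Htf Hmax HD f finj hf o2 o3 isT.
pose s := [:: A o0; A o1; A o2; A o3; B o0; B o1; B o2; B o3; u1; v1; u2; v2].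
have [y hy] := HD 4 isT (fun k => nth u1 s k).
rewrite (card_cnt (3 * 4) (fun k => e (nth u1 s k) y)) /= in hy.
have := comb12 (e (A o0) y) (e (A o1) y) (e (A o2) y) (e (A o3) y)
  (e (B o0) y) (e (B o1) y) (e (B o2) y) (e (B o3) y)
  (e u1 y) (e v1 y) (e u2 y) (e v2 y).
rewrite (tri2 _ _ Htf _ _ y (@AB _ _ f hf o0 o1 isT))
  (tri2 _ _ Htf _ _ y (@AB _ _ f hf o0 o2 isT))
  (tri2 _ _ Htf _ _ y (@AB _ _ f hf o0 o3 isT))
  (tri2 _ _ Htf _ _ y (@AB _ _ f hf o1 o0 isT))
  (tri2 _ _ Htf _ _ y (@AB _ _ f hf o1 o2 isT))
  (tri2 _ _ Htf _ _ y (@AB _ _ f hf o1 o3 isT))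
  (tri2 _ _ Htf _ _ y (@AB _ _ f hf o2 o0 isT))
  (tri2 _ _ Htf _ _ y (@AB _ _ f hf o2 o1 isT))
  (tri2 _ _ Htf _ _ y (@AB _ _ f hf o2 o3 isT))
  (tri2 _ _ Htf _ _ y (@AB _ _ f hf o3 o0 isT))
  (tri2 _ _ Htf _ _ y (@AB _ _ f hf o3 o1 isT))
  (tri2 _ _ Htf _ _ y (@AB _ _ f hf o3 o2 isT))
  (tri2 _ _ Htf _ _ y (etrans (Hsym _ _) a1))
  (tri2 _ _ Htf _ _ y (etrans (Hsym _ _) b1))
  (tri2 _ _ Htf _ _ y (etrans (Hsym _ _) c1))
  (tri2 _ _ Htf _ _ y (etrans (Hsym _ _) d1))
  (tri2 _ _ Htf _ _ y (etrans (Hsym _ _) a2))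
  (tri2 _ _ Htf _ _ y (etrans (Hsym _ _) b2))
  (tri2 _ _ Htf _ _ y (etrans (Hsym _ _) c2))
  (tri2 _ _ Htf _ _ y (etrans (Hsym _ _) d2))
  (tri2 _ _ Htf _ _ y uv1)
  (tri2 _ _ Htf _ _ y uv2).
by move=> /(_ isT); rewrite leqNgt hy.
Qed.
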